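(* Let $H=(U,(A_1,\dots,A_m))$ be a harmonic set system with $|U|<m(m-2)$ and $m\ge 51$. Then one can partition $U=U^{(1)}\sqcup U^{(2)}$ such that the induced set systems $H^{(i)}=(U^{(i)},(A_1\cap U^{(i)},\dots,A_m\cap U^{(i)}))$, $i=1,2$, are harmonic and satisfy $H^{(1)}_I=H^{(2)}_{\emptyset,I}=\emptyset$ for every nonconsecutive $I\subseteq[m]$ of size $3$.
   Context: For a set system $G=(V,(B_1,\dots,B_m))$ and $I_1,I_2\subseteq[m]$, $G_{I_1,I_2}=\bigcap_{i\in I_1}B_i\cap\bigcap_{i\in I_2}(V\setminus B_i)$ (empty intersection $=V$), $G_I=G_{I,\emptyset}$. The run decomposition of a finite set $I$ of positive integers is the partition of sizes, in nonincreasing order, of the maximal runs of consecutive integers in $I$. $G$ is harmonic if $|G_I|=|G_J|$ whenever $I,J\subseteq[m]$ have the same run decomposition. A set of integers is nonconsecutive if no two distinct elements differ by exactly $1$. *)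

(* Defs.v *)
From mathcomp Require Import all_boot all_order.
Set Implicit Arguments. Unset Strict Implicit. Unset Printing Implicit Defensive.

(* A set system G = (U, (A_1,...,A_m)) is represented by a ground set
   U : {set T} (T a finType) and A : 'I_m -> {set T}; the ordinal i : 'I_m
   stands for the index (val i).+1 in [m] = {1,...,m}. *)

Definition Gsys (T : finType) (m : nat) (U : {set T}) (A : 'I_m -> {set T})
  (I1 I2 : {set 'I_m}) : {set T} :=
  U :&: (\bigcap_(i in I1) A i) :&: (\bigcap_(i in I2) (U :\: A i)).

Definition idx (m : nat) (I : {set 'I_m}) : seq nat := [seq (val i).+1 | i <- enum I].

Definition run_length (I : seq nat) (x : nat) : nat :=
  find (fun k => x + k \notin I) (iota 0 (size I).+1).

Definition run_start (I : seq nat) (x : nat) : bool :=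
  (x \in I) && ~~ ((0 < x) && (x.-1 \in I)).

Definition run_decomp (I : seq nat) : seq nat :=
  sort geq [seq run_length I x | x <- undup I & run_start I x].

Definition harmonic (T : finType) (m : nat) (U : {set T}) (A : 'I_m -> {set T}) : Prop :=
  forall I J : {set 'I_m}, run_decomp (idx I) = run_decomp (idx J) ->
    #|Gsys U A I set0| = #|Gsys U A J set0|.

Definition nonconsecutive (m : nat) (I : {set 'I_m}) : Prop :=
  forall i j, i \in I -> j \in I -> val i <> (val j).+1.

(* Main.v *)
Require Import Defs.
From mathcomp Require Import all_boot all_order all_algebra.
From mathcomp Require Import zify.
Set Implicit Arguments. Unset Strict Implicit. Unset Printing Implicit Defensive.

Lemma rl_spec (L : seq nat) x : uniq L ->
  [/\ run_length L x <= size L, x + run_length L x \notin L &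
      forall k, k < run_length L x -> x + k \in L].
Proof.
move=> uL.
have hasp : has (fun k => x + k \notin L) (iota 0 (size L).+1).
  apply/negPn/negP => /hasPn H.
  have sub : {subset iota x (size L).+1 <= L}.
    move=> z; rewrite mem_iota => /andP[h1 h2].
    have hz : z - x \in iota 0 (size L).+1 by rewrite mem_iota; lia.
    by have := H _ hz; rewrite subnKC // => /negbNE.
  have := uniq_leq_size (iota_uniq x (size L).+1) sub.
  by rewrite size_iota ltnn.
rewrite /run_length; split.
- by move: hasp; rewrite has_find size_iota.
- have := nth_find 0 hasp; rewrite nth_iota //.
  by move: hasp; rewrite has_find size_iota.
- move=> k hk; have := before_find 0 hk; rewrite nth_iota /=.
    by move/negbFE.
  by move: hasp; rewrite has_find size_iota => h; apply: ltn_trans h.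
Qed.

Lemma rl_eq (L : seq nat) x r : uniq L -> x + r \notin L ->
  (forall k, k < r -> x + k \in L) -> run_length L x = r.
Proof.
move=> uL h1 h2; have [_ s2 s3] := rl_spec x uL.
case: (ltngtP (run_length L x) r) => // h.
- by move: (h2 _ h); rewrite (negbTE s2).
- by move: (s3 _ h); rewrite (negbTE h1).
Qed.

Definition LL (I : seq nat) := [seq run_length I x | x <- undup I & run_start I x].

Definition sepn (s1 s2 : seq nat) :=
  forall a b, a \in s1 -> b \in s2 -> [/\ a != b, a != b.+1 & b != a.+1].

Lemma sep_local (s s1 s2 : seq nat) : uniq s -> uniq s1 -> sepn s1 s2 ->
  (forall z, (z \in s) = (z \in s1) || (z \in s2)) ->
  forall x, x \in s1 -> run_start s x = run_start s1 x /\ run_length s x = run_length s1 x.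
Proof.
move=> us us1 sep ms x xs1; split.
  rewrite /run_start ms xs1 /=; congr (~~ _).
  case: x xs1 => //= x xs1; rewrite ms.
  case: (boolP (x \in s2)) => xs2; last by rewrite orbF.
  rewrite orbT; symmetry; apply/negP => _.
  by have [_ /eqP] := sep _ _ xs1 xs2.
have [r1 r2 r3] := rl_spec x us1.
apply: rl_eq => //.
  rewrite ms negb_or r2 /=; apply/negP => h.
  have r0 : 0 < run_length s1 x.
    case: (posnP (run_length s1 x)) => // e; by move: r2; rewrite e addn0 xs1.
  have h' := r3 (run_length s1 x).-1 ltac:(lia).
  by have [_ _ /eqP] := sep _ _ h' h; apply; lia.
by move=> k hk; rewrite ms r3.
Qed.

Lemma sepnC s1 s2 : sepn s1 s2 -> sepn s2 s1.
Proof. by move=> h a b ha hb; have [h1 h2 h3] := h _ _ hb ha; split; rewrite // eq_sym. Qed.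

Lemma LL_part (s s1 s2 : seq nat) : uniq s -> uniq s1 -> sepn s1 s2 ->
  (forall z, (z \in s) = (z \in s1) || (z \in s2)) ->
  [seq run_length s x | x <- s1 & run_start s x] = LL s1.
Proof.
move=> us us1 sep ms; rewrite /LL (undup_id us1).
rewrite (@eq_in_filter _ (run_start s) (run_start s1)); last first.
  by move=> x xs; have [] := sep_local us us1 sep ms xs.
apply/eq_in_map => x; rewrite mem_filter => /andP[_ xs].
by have [] := sep_local us us1 sep ms xs.
Qed.

Lemma LL_cat (s s1 s2 : seq nat) : uniq s -> uniq s1 -> uniq s2 -> sepn s1 s2 ->
  (forall z, (z \in s) = (z \in s1) || (z \in s2)) ->
  perm_eq (LL s) (LL s1 ++ LL s2).
Proof.
move=> us us1 us2 sep ms.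
have u12 : uniq (s1 ++ s2).
  rewrite cat_uniq us1 us2 /= andbT; apply/hasPn => b bs2; apply/negP => bs1.
  by have [/eqP] := sep _ _ bs1 bs2.
have p : perm_eq s (s1 ++ s2) by apply: uniq_perm => // z; rewrite mem_cat ms.
rewrite {1}/LL (undup_id us).
apply: perm_trans (perm_map _ (perm_filter _ p)) _.
rewrite filter_cat map_cat (LL_part us us1 sep ms).
rewrite (@LL_part s s2 s1 us us2 (sepnC sep)) //.
by move=> z; rewrite ms orbC.
Qed.

Definition cov (s : seq nat) z x := run_start s x && (x <= z < x + run_length s x).

Lemma rl_count s x : uniq s ->
  count (fun z => x <= z < x + run_length s x) s = run_length s x.
Proof.
move=> us; have [_ _ r3] := rl_spec x us.
rewrite -size_filter.
have p : perm_eq [seq z <- s | x <= z < x + run_length s x] (iota x (run_length s x)).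
  apply: uniq_perm; [exact: filter_uniq | exact: iota_uniq|] => z.
  rewrite mem_filter mem_iota; case: (boolP (x <= z < x + run_length s x)) => //= h.
  by have := r3 (z - x) ltac:(lia); rewrite subnKC //; lia.
by rewrite (perm_size p) size_iota.
Qed.

Lemma cov_unique s z x1 x2 : uniq s -> cov s z x1 -> cov s z x2 -> x1 = x2.
Proof.
move=> us.
wlog le12 : x1 x2 / x1 <= x2.
  move=> H c1 c2; case: (leqP x1 x2) => h; first exact: H.
  by symmetry; apply: H => //; apply: ltnW.
move=> /andP[rs1 c1] /andP[rs2 c2].
case: (ltngtP x1 x2) le12 => // lt12 _.
have [_ _ r3] := rl_spec x1 us.
have := r3 (x2.-1 - x1) ltac:(lia); rewrite subnKC; last by lia.
move: rs2; rewrite /run_start => /andP[_ /negP h] h'.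
by case: h; apply/andP; split => //; lia.
Qed.

Lemma cov_count s z : uniq s -> z \in s -> count (cov s z) s = 1.
Proof.
move=> us zs.
pose P x := (x <= z) && all (mem s) (iota x (z - x).+1).
have exP : exists x, P x by exists z; rewrite /P leqnn subnn /= zs.
case: (ex_minnP exP) => x0 /andP[x0z allx0] minx0.
have x0s : x0 \in s by apply: (allP allx0); rewrite mem_iota; lia.
have cx0 : cov s z x0.
  apply/andP; split.
    rewrite /run_start x0s /=; apply/negP => /andP[x0p x0ms].
    have : P x0.-1.
      rewrite /P; apply/andP; split; first lia.
      apply/allP => k; rewrite mem_iota => hk.
      case: (eqVneq k x0.-1) => [-> //|ne].
      by apply: (allP allx0); rewrite mem_iota; lia.
    by move/minx0; lia.
  rewrite x0z /=; case: (ltnP z (x0 + run_length s x0)) => // h.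
  have [_ r2 _] := rl_spec x0 us.
  have : x0 + run_length s x0 \in s by apply: (allP allx0); rewrite mem_iota; lia.
  by rewrite (negbTE r2).
have -> : count (cov s z) s = count (pred1 x0) s.
  2: by rewrite count_uniq_mem ?x0s.
apply: eq_in_count => x xs /=; apply/idP/eqP => [cx|->//].
exact: cov_unique us cx cx0.
Qed.

Lemma sumn_LL s : uniq s -> sumn (LL s) = size s.
Proof.
move=> us; rewrite /LL (undup_id us) sumnE big_map big_filter.
transitivity (\sum_(x <- s | run_start s x) \sum_(z <- s)
                 (if x <= z < x + run_length s x then 1 else 0)).
  apply: eq_bigr => x _; rewrite -big_mkcond sum1_count; by rewrite rl_count.
rewrite exchange_big /=.
transitivity (\sum_(z <- s) 1).
  rewrite [LHS]big_seq [RHS]big_seq; apply: eq_bigr => z zs.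
  by rewrite -big_mkcondr sum1_count cov_count.
by rewrite sum1_size.
Qed.

Lemma map_const_nseq (T : Type) (c : nat) (s : seq T) : [seq c | _ <- s] = nseq (size s) c.
Proof. by elim: s => //= x s ->. Qed.

Lemma geq_total : total geq. Proof. by move=> a b /=; apply: leq_total. Qed.
Lemma geq_trans : transitive geq. Proof. by move=> a b c /= h1 h2; apply: leq_trans h2 h1. Qed.
Lemma geq_anti : antisymmetric geq.
Proof. by move=> a b /andP[/= h1 h2]; apply/eqP; rewrite eqn_leq h1 h2. Qed.

Lemma rd_perm (s1 s2 : seq nat) :
  run_decomp s1 = run_decomp s2 <-> perm_eq (LL s1) (LL s2).
Proof.
split => [h|h]; first by apply/(perm_sortP geq_total geq_trans geq_anti).
exact/(perm_sortP geq_total geq_trans geq_anti).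
Qed.

Section Sets.
Variable m : nat.
Implicit Types I J F : {set 'I_m}.

Definition adj (i j : 'I_m) := (val i == (val j).+1) || (val j == (val i).+1).
Definition indep I := [forall i in I, forall j in I, val i != (val j).+1].
Definition sep I F := [forall i in I, forall f in F, (i != f) && ~~ adj i f].

Lemma idx_uniq I : uniq (idx I).
Proof. by rewrite map_inj_uniq ?enum_uniq // => a b [] /val_inj. Qed.

Lemma size_idx I : size (idx I) = #|I|.
Proof. by rewrite size_map cardE. Qed.

Lemma mem_idxP I n : reflect (exists2 i, i \in I & n = (val i).+1) (n \in idx I).
Proof.
apply: (iffP mapP) => [[i]|[i]]; rewrite ?mem_enum => hi ->; by exists i; rewrite ?mem_enum.
Qed.

Lemma mem_idx I (i : 'I_m) : ((val i).+1 \in idx I) = (i \in I).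
Proof.
apply/mem_idxP/idP => [[j hj [/val_inj ->]]//|hi]; by exists i.
Qed.

Lemma idx_U I F z : (z \in idx (I :|: F)) = (z \in idx I) || (z \in idx F).
Proof.
apply/mem_idxP/orP => [[i]|[/mem_idxP[i hi ->]|/mem_idxP[i hi ->]]].
- by rewrite inE => /orP[h|h] ->; [left|right]; rewrite mem_idx.
- by exists i; rewrite // inE hi.
- by exists i; rewrite // inE hi orbT.
Qed.

Lemma sep_sepn I F : sep I F -> sepn (idx I) (idx F).
Proof.
move=> /forallP H a b /mem_idxP[i hi ->] /mem_idxP[f hf ->].
have /forallP/(_ f) := implyP (H i) hi.
rewrite hf /= => /andP[ne]; rewrite /adj negb_or => /andP[h1 h2].
by split; rewrite ?eqSS //; apply: contra ne => /eqP/val_inj ->.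
Qed.

Lemma sepC I F : sep I F -> sep F I.
Proof.
move=> /forallP H; apply/forallP => f; apply/implyP => hf; apply/forallP => i.
apply/implyP => hi; have /forallP/(_ f) := implyP (H i) hi.
by rewrite hf /= eq_sym /adj orbC.
Qed.

Lemma LL_U I F : sep I F ->
  perm_eq (LL (idx (I :|: F))) (LL (idx I) ++ LL (idx F)).
Proof.
move=> h; apply: LL_cat; rewrite ?idx_uniq //; first exact: sep_sepn.
by move=> z; rewrite idx_U.
Qed.

Lemma rd_card I J : run_decomp (idx I) = run_decomp (idx J) -> #|I| = #|J|.
Proof.
move=> /rd_perm/perm_sumn; by rewrite !sumn_LL ?idx_uniq // !size_idx.
Qed.

Lemma rd_U I J F : sep I F -> sep J F -> run_decomp (idx I) = run_decomp (idx J) ->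
  run_decomp (idx (I :|: F)) = run_decomp (idx (J :|: F)).
Proof.
move=> hI hJ /rd_perm p; apply/rd_perm.
apply: perm_trans (LL_U hI) _; rewrite perm_sym; apply: perm_trans (LL_U hJ) _.
by rewrite perm_cat2r perm_sym.
Qed.

Lemma LL_indep I : indep I -> LL (idx I) = nseq #|I| 1.
Proof.
move=> /forallP H.
have ni : forall i j, i \in I -> j \in I -> val i != (val j).+1.
  by move=> i j hi hj; have /forallP/(_ j) := implyP (H i) hi; rewrite hj.
rewrite /LL undup_id ?idx_uniq //.
have -> : [seq x <- idx I | run_start (idx I) x] = idx I.
  rewrite -[RHS]filter_predT; apply: eq_in_filter => x /mem_idxP[i hi ->].
  rewrite /run_start mem_idx hi /=; apply/negP => /mem_idxP[j hj e].
  by move: (ni i j hi hj) e => /eqP h e; apply: h.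
rewrite -size_idx -(map_const_nseq 1); apply/eq_in_map => x /mem_idxP[i hi ->].
apply: rl_eq; rewrite ?idx_uniq //; last by case=> // ; rewrite addn0 mem_idx.
apply/negP => /mem_idxP[j hj e].
by move: (ni j i hj hi) e => /eqP h e; apply: h; lia.
Qed.

Lemma rd_indep I J : indep I -> indep J -> #|I| = #|J| ->
  run_decomp (idx I) = run_decomp (idx J).
Proof.
by move=> hI hJ e; rewrite (_ : run_decomp _ = sort geq (LL (idx I))) // LL_indep //
  (_ : run_decomp _ = sort geq (LL (idx J))) // LL_indep // e.
Qed.

End Sets.

Import GRing.Theory.

Section Alt.
Variable T : finType.
Local Open Scope ring_scope.

Definition sgn (n : nat) : int := (-1) ^+ n.

Lemma alt_sum0 (Y : {set T}) : Y != set0 ->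
  \sum_(K : {set T} | K \subset Y) sgn #|K| = 0.
Proof.
case/set0Pn => a aY.
pose h (K : {set T}) := if a \in K then K :\ a else a |: K.
have hh : involutive h.
  move=> K; rewrite /h; case: (boolP (a \in K)) => aK.
    by rewrite setD11 setD1K.
  by rewrite setU11 setU1K.
set S := (\sum_(K | _) _).
have : S = - S.
  rewrite /S {1}(reindex_inj (inv_inj hh)) -sumrN; apply: eq_big => K.
    rewrite /h; case: (boolP (a \in K)) => aK.
      apply/idP/idP => H; first by rewrite -(setD1K aK) subUset sub1set aY.
      by apply: subset_trans H; apply: subsetDl.
    by rewrite subUset sub1set aY.
  move=> _; rewrite /h /sgn; case: (boolP (a \in K)) => aK.
    by rewrite [in RHS](cardsD1 a K) aK exprS mulN1r opprK.
  by rewrite cardsU1 aK exprS mulN1r.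
move=> e; have : (2 * S = 0)%R by rewrite mulr2n mulrDl mul1r {1}e addNr.
by move/eqP; rewrite mulf_eq0 /= => /eqP.
Qed.

Lemma alt_sum (Y : {set T}) :
  \sum_(K : {set T} | K \subset Y) sgn #|K| = (Y == set0)%:R.
Proof.
case: (eqVneq Y set0) => [->|ne]; last by rewrite alt_sum0.
rewrite (eq_bigl (fun K => K == set0)); last by move=> K; rewrite subset0.
by rewrite big_pred1_eq cards0.
Qed.

Lemma alt_sum_sub (X S : {set T}) :
  \sum_(K : {set T} | K \subset X) (if K \subset S then sgn #|K| else 0)
  = (X :&: S == set0)%:R.
Proof.
rewrite -big_mkcondr -alt_sum; apply: eq_bigl => K.
by rewrite subsetI.
Qed.

Lemma sum_card (X : {set T}) (phi : nat -> int) :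
  \sum_(K : {set T} | K \subset X) phi #|K| =
  \sum_(k < #|X|.+1) phi k *+ 'C(#|X|, k).
Proof.
rewrite (partition_big (fun K : {set T} => inord #|K| : 'I_(#|X|.+1)) xpredT) //=.
apply: eq_bigr => k _.
rewrite -cards_draws -sumr_const.
apply: eq_big => K; last first.
  move=> /andP[KX /eqP <-]; rewrite inordK //; rewrite ltnS; exact: subset_leq_card.
rewrite inE; case: (boolP (K \subset X)) => //= KX.
by rewrite -(inj_eq val_inj) /= inordK // ltnS subset_leq_card.
Qed.

Lemma sum_card_eq (X X' : {set T}) (phi : nat -> int) : #|X| = #|X'| ->
  \sum_(K : {set T} | K \subset X) phi #|K| = \sum_(K : {set T} | K \subset X') phi #|K|.
Proof. by move=> e; rewrite !sum_card e. Qed.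

End Alt.

Lemma cardsU_le (T : finType) (A B : {set T}) : #|A :|: B| <= #|A| + #|B|.
Proof. by rewrite cardsU leq_subr. Qed.

Lemma pick_sub (T : finType) (X : {set T}) k : k <= #|X| ->
  exists Y : {set T}, Y \subset X /\ #|Y| = k.
Proof.
move=> hk.
have : 0 < #|[set Y : {set T} | Y \subset X & #|Y| == k]| by rewrite cards_draws bin_gt0.
rewrite card_gt0 => /set0Pn[Y]; rewrite inE => /andP[h /eqP e]; by exists Y.
Qed.

Section Sets3.
Variable m : nat.
Implicit Types I J X Y F : {set 'I_m}.

Lemma indep_sub X Y : indep X -> Y \subset X -> indep Y.
Proof.
move=> /forallP H sYX; apply/forallP => i; apply/implyP => hi; apply/forallP => j.
apply/implyP => hj; have /forallP/(_ j) := implyP (H i) (subsetP sYX _ hi).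
by rewrite (subsetP sYX _ hj).
Qed.

Lemma indepP X : reflect (forall i j, i \in X -> j \in X -> val i <> (val j).+1) (indep X).
Proof.
apply: (iffP forallP) => [H i j hi hj|H i].
  by have /forallP/(_ j) := implyP (H i) hi; rewrite hj /= => /eqP.
apply/implyP => hi; apply/forallP => j; apply/implyP => hj; apply/eqP; exact: H.
Qed.

Lemma nonconsec_indep X : nonconsecutive X -> indep X.
Proof. by move=> H; apply/indepP. Qed.

Lemma indep_U X Y : indep X -> indep Y ->
  (forall x y, x \in X -> y \in Y -> val x <> (val y).+1 /\ val y <> (val x).+1) ->
  indep (X :|: Y).
Proof.
move=> /indepP hX /indepP hY hXY; apply/indepP => i j.
rewrite !inE => /orP[hi|hi] /orP[hj|hj].
- exact: hX.
- by have [] := hXY _ _ hi hj.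
- by have [] := hXY _ _ hj hi.
- exact: hY.
Qed.

Definition NB X := [set i : 'I_m | [exists j in X, (i == j) || adj i j]].

Lemma NB_card X : #|NB X| <= 3 * #|X|.
Proof.
pose sc (j : 'I_m) : 'I_m := insubd j (val j).+1.
pose pr (j : 'I_m) : 'I_m := insubd j (val j).-1.
have sub : NB X \subset X :|: (sc @: X) :|: (pr @: X).
  apply/subsetP => i; rewrite inE => /existsP[j /andP[hj]].
  rewrite /adj => /orP[/eqP->|/orP[/eqP e|/eqP e]]; rewrite !inE ?hj //.
    apply/orP; left; apply/orP; right; apply/imsetP; exists j => //.
    by apply: val_inj; rewrite /= val_insubd -e ltn_ord.
  apply/orP; right; apply/imsetP; exists j => //.
  by apply: val_inj; rewrite /= val_insubd e /= ltn_ord.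
apply: leq_trans (subset_leq_card sub) _.
apply: leq_trans (cardsU_le _ _) _.
apply: leq_trans (leq_add (leq_trans (cardsU_le X (sc @: X))
  (leq_add (leqnn _) (leq_imset_card sc X))) (leq_imset_card pr X)) _.
by rewrite !mulSn mul0n addn0 addnA.
Qed.

Lemma NB_sep X F : F \subset ~: NB X -> sep X F.
Proof.
move=> sF; apply/forallP => i; apply/implyP => hi; apply/forallP => f; apply/implyP => hf.
have := subsetP sF _ hf; rewrite !inE => /existsP H.
apply/andP; split.
  by apply/negP => /eqP e; apply: H; exists i; rewrite hi e eqxx.
apply/negP => a; apply: H; exists i; rewrite hi /= /adj.
by move: a; rewrite /adj orbC => ->; rewrite orbT.
Qed.

Lemma NB_self X : X \subset NB X.
Proof. by apply/subsetP => i hi; rewrite inE; apply/existsP; exists i; rewrite hi eqxx. Qed.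

Lemma NB_mono X Y : X \subset Y -> NB X \subset NB Y.
Proof.
move=> s; apply/subsetP => i; rewrite !inE => /existsP[j /andP[hj h]].
by apply/existsP; exists j; rewrite h (subsetP s).
Qed.

Lemma NB_nadj X (i j : 'I_m) : i \in X -> j \in ~: NB X ->
  val i <> (val j).+1 /\ val j <> (val i).+1.
Proof.
move=> hi; rewrite !inE => /existsP H; split => e; apply: H; exists i;
  by rewrite hi /adj e eqxx ?orbT.
Qed.

Definition Dset : {set 'I_m} := [set i : 'I_m | odd i].
Definition Eset : {set 'I_m} := ~: Dset.

Lemma indepE : indep Eset.
Proof. apply/indepP => i j; rewrite !inE => hi hj e; by move: hi; rewrite e /= hj. Qed.

Lemma indepD : indep Dset.
Proof. apply/indepP => i j; rewrite !inE => hi hj e; by move: hi; rewrite e /= hj. Qed.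

Lemma cardED : #|Eset| + #|Dset| = m.
Proof. by rewrite addnC cardsC card_ord. Qed.

Lemma cardE2 : m <= 2 * #|Eset|.
Proof.
have : #|Dset| <= #|Eset|.
  pose pr (j : 'I_m) : 'I_m := insubd j (val j).-1.
  have inj : {in Dset &, injective pr}.
    move=> a b; rewrite !inE => ha hb /(congr1 val) /=.
    rewrite !val_insubd !(leq_ltn_trans (leq_pred _) (ltn_ord _)) => e.
    have a0 := odd_gt0 ha. have b0 := odd_gt0 hb.
    have e' : (nat_of_ord a).-1 = (nat_of_ord b).-1 := e.
    by apply: val_inj; change (nat_of_ord a = nat_of_ord b); lia.
  rewrite -(card_in_imset inj); apply: subset_leq_card; apply/subsetP => x /imsetP[a ha ->].
  move: ha; rewrite !inE /= val_insubd (leq_ltn_trans (leq_pred _) (ltn_ord _)).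
  by case: a => [[|k] ?].
have := cardED; lia.
Qed.

End Sets3.

Lemma bin_step n b : 2 * b.+1 <= n -> 'C(n, b) <= 'C(n, b.+1).
Proof.
move=> h; have e := mul_bin_left n b.
rewrite -(leq_pmul2l (ltn0Sn b)) e leq_mul2r; apply/orP; right; lia.
Qed.

Lemma bin_mono n a b : a <= b -> 2 * b <= n -> 'C(n, a) <= 'C(n, b).
Proof.
elim: b => [|b IH] ha hb; first by move: ha; rewrite leqn0 => /eqP->.
case: (ltngtP a b.+1) ha => // h _.
  by apply: leq_trans (IH h ltac:(lia)) (bin_step hb).
by rewrite h.
Qed.

Lemma bin3 n s : 3 <= s -> s + 3 <= n -> 'C(n, 3) <= 'C(n, s).
Proof.
move=> h1 h2; case: (leqP (2 * s) n) => h3; first exact: bin_mono.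
have -> : 'C(n, s) = 'C(n, n - s) by rewrite bin_sub //; lia.
apply: bin_mono; lia.
Qed.

Lemma bin3_big n m : 51 <= m -> m <= 2 * n -> m * (m - 2) <= 'C(n, 3).
Proof.
move=> h1 h2.
have e1 := mul_bin_left n 0. have e2 := mul_bin_left n 1. have e3 := mul_bin_left n 2.
rewrite bin0 muln1 subn0 mul1n in e1.
have e : 6 * 'C(n, 3) = n * (n - 1) * (n - 2).
  move: e1 e2 e3; set c1 := 'C(n, 1); set c2 := 'C(n, 2); set c3 := 'C(n, 3).
  move=> e1 e2 e3; rewrite e1 in e2; nia.
have h3 : m * (m - 2) <= 2 * n * (2 * n - 2) by apply: leq_mul; lia.
have h4 : 6 * (2 * n * (2 * n - 2)) <= n * (n - 1) * (n - 2).
  have -> : 6 * (2 * n * (2 * n - 2)) = n * (n - 1) * 24 by rewrite mulnA; nia.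
  by apply: leq_mul => //; lia.
by rewrite -(leq_pmul2l (isT : 0 < 6)) e; apply: leq_trans h4; rewrite leq_pmul2l.
Qed.

Import GRing.Theory.

Lemma cardsU_disj (T : finType) (X Y : {set T}) : X :&: Y = set0 -> #|X :|: Y| = #|X| + #|Y|.
Proof. by move=> e; rewrite cardsU e cards0 subn0. Qed.

Lemma cardsD_ge (T : finType) (X Z : {set T}) : #|X| - #|Z| <= #|X :\: Z|.
Proof. rewrite cardsD; apply: leq_sub2l; apply: subset_leq_card; apply: subsetIr. Qed.

Lemma cardZ (T : finType) (S : {set T}) (p : pred T) :
  (#|[set y in S | p y]| : int) = (\sum_(y in S) (if p y then 1 else 0))%R.
Proof.
rewrite -sum1_card -natz natr_sum -big_mkcondr /=.
by apply: eq_bigl => y; rewrite inE.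
Qed.

Lemma set_split (T : finType) (S P Tt : {set T}) : Tt \subset P ->
  (S :&: P == Tt) = (Tt \subset S) && ((P :\: Tt) :&: S == set0).
Proof.
move=> sTP; apply/eqP/andP => [e|[h1 /eqP h2]].
  split; first by rewrite -e subsetIl.
  apply/eqP/setP => i; move/setP/(_ i): e; rewrite !inE.
  by case: (i \in Tt); case: (i \in S); case: (i \in P).
apply/setP => i; move/setP/(_ i): h2; rewrite !inE.
have a1 : (i \in Tt) ==> (i \in S) by apply/implyP/(subsetP h1).
have a2 : (i \in Tt) ==> (i \in P) by apply/implyP/(subsetP sTP).
by move: a1 a2; case: (i \in Tt); case: (i \in S); case: (i \in P).
Qed.

Section MainA.
Variables (T : finType) (m : nat) (U : {set T}) (A : 'I_m -> {set T}).
Hypothesis harm : harmonic U A.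
Hypothesis small : #|U| < m * (m - 2).
Hypothesis m51 : 51 <= m.
Implicit Types I J P Q X Y Tt K R : {set 'I_m}.

Definition Sy y : {set 'I_m} := [set i | y \in A i].
Definition f I := #|[set y in U | I \subset Sy y]|.

Lemma GsysE (V : {set T}) (B : 'I_m -> {set T}) I :
  Gsys V B I set0 = [set y in V | [forall i in I, y \in B i]].
Proof.
apply/setP => y; rewrite /Gsys !inE big_set0 inE andbT; congr (_ && _).
by apply/bigcapP/forall_inP.
Qed.

Lemma fE I : #|Gsys U A I set0| = f I.
Proof.
rewrite GsysE /f; apply: eq_card => y; rewrite !inE; congr (_ && _).
apply/forall_inP/subsetP => H i hi; first by rewrite inE; exact: H.
by have := H i hi; rewrite inE.
Qed.

Lemma harm_ind I J : indep I -> indep J -> #|I| = #|J| -> f I = f J.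
Proof. by move=> hI hJ e; rewrite -!fE; apply: harm; apply: rd_indep. Qed.

Definition aa k := if [pick J0 | indep J0 && (#|J0| == k)] is Some J0 then f J0 else 0.

Lemma aaE I : indep I -> aa #|I| = f I.
Proof.
move=> hI; rewrite /aa; case: pickP => [J /andP[hJ /eqP e]|H].
  exact: harm_ind.
by have := H I; rewrite hI eqxx.
Qed.

Definition g P Tt := #|[set y in U | Sy y :&: P == Tt]|.

Local Open Scope ring_scope.

Lemma fZ I : (f I : int) = \sum_(y in U) (if I \subset Sy y then 1 else 0).
Proof. exact: (cardZ U (fun y => I \subset Sy y)). Qed.

Lemma gZ P Tt : (g P Tt : int) = \sum_(y in U) (if Sy y :&: P == Tt then 1 else 0).
Proof. exact: (cardZ U (fun y => Sy y :&: P == Tt)). Qed.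

Lemma g_formula P Tt : Tt \subset P ->
  (g P Tt : int) = \sum_(K : {set 'I_m} | K \subset P :\: Tt) sgn #|K| * (f (Tt :|: K) : int).
Proof.
move=> sTP; rewrite gZ.
under [in RHS]eq_bigr do rewrite fZ mulr_sumr.
rewrite exchange_big /=; apply: eq_bigr => y _.
transitivity (if Tt \subset Sy y then
   \sum_(K : {set 'I_m} | K \subset P :\: Tt) (if K \subset Sy y then sgn #|K| else 0) else 0).
  rewrite alt_sum_sub (set_split _ sTP).
  by case: (Tt \subset Sy y); case: (_ == set0).
case: (boolP (Tt \subset Sy y)) => h.
  apply: eq_bigr => K _; rewrite subUset h /=.
  by case: (K \subset Sy y); rewrite ?mulr1 ?mulr0.
by rewrite big1 // => K _; rewrite subUset (negbTE h) /= mulr0.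
Qed.

Local Close Scope ring_scope.

Lemma g_eq P Q Tt (Tt' : {set 'I_m}) : indep P -> indep Q -> Tt \subset P -> Tt' \subset Q ->
  #|P| = #|Q| -> #|Tt| = #|Tt'| -> g P Tt = g Q Tt'.
Proof.
move=> iP iQ sP sQ eP eT.
pose phi k : int := (sgn k * (aa (#|Tt| + k)%N : int))%R.
have key : forall P0 (T0 : {set 'I_m}), indep P0 -> T0 \subset P0 -> #|T0| = #|Tt| ->
    (g P0 T0 : int) = (\sum_(K : {set 'I_m} | K \subset P0 :\: T0) phi #|K|)%R.
  move=> P0 T0 i0 s0 e0; rewrite g_formula //; apply: eq_bigr => K hK.
  have dis : T0 :&: K = set0.
    apply/setP => i; rewrite !inE; apply/negP => /andP[h1 h2].
    by have := subsetP hK _ h2; rewrite !inE h1.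
  rewrite /phi /= -e0 -(cardsU_disj dis) aaE //.
  apply: (indep_sub i0); rewrite subUset s0; apply: subset_trans hK (subsetDl _ _).
have e1 := key P Tt iP sP erefl.
have e2 := key Q Tt' iQ sQ (esym eT).
have : (g P Tt : int) = g Q Tt'.
  rewrite e1 e2; apply: sum_card_eq.
  rewrite !cardsD; move/setIidPr: sP => ->; by move/setIidPr: sQ => ->; rewrite eP eT.
by case.
Qed.

Lemma count_lb P (T0 : {set 'I_m}) y : indep P -> y \in U -> Sy y :&: P = T0 ->
  'C(#|P|, #|T0|) <= #|U|.
Proof.
move=> iP yU e.
have s0 : T0 \subset P by rewrite -e subsetIr.
rewrite -cards_draws.
apply: leq_trans (leq_imset_card (fun z => Sy z :&: P) U).
apply: subset_leq_card; apply/subsetP => X; rewrite inE => /andP[sX /eqP eX].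
have : 0 < g P X.
  rewrite (g_eq iP iP sX s0 erefl eX) card_gt0; apply/set0Pn; exists y.
  by rewrite !inE yU e eqxx.
rewrite card_gt0 => /set0Pn[z]; rewrite inE => /andP[zU /eqP ez].
by apply/imsetP; exists z.
Qed.

End MainA.

Section MainA2.
Variables (T : finType) (m : nat) (U : {set T}) (A : 'I_m -> {set T}).
Hypothesis harm : harmonic U A.
Hypothesis small : #|U| < m * (m - 2).
Hypothesis m51 : 51 <= m.
Implicit Types I J P Q X Y Tt K R : {set 'I_m}.

Local Notation S := (Sy A).
Local Notation E := (Eset m).
Local Notation D := (Dset m).

Lemma cardE26 : 26 <= #|E|.
Proof. have := cardE2 m; lia. Qed.

Lemma W6 y Tt R : y \in U -> #|Tt| = 3 -> #|R| = 3 -> Tt \subset S y ->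
  R \subset ~: S y -> indep (Tt :|: R) -> False.
Proof.
move=> yU cT cR sT sR iP.
have dTR : Tt :&: R = set0.
  apply/setP => i; rewrite !inE; apply/negP => /andP[h1 h2].
  by have := subsetP sR _ h2; rewrite inE (subsetP sT _ h1).
have cP : #|Tt :|: R| = 6 by rewrite cardsU_disj // cT cR.
have eSy : S y :&: (Tt :|: R) = Tt.
  apply/setP => i; rewrite in_setI in_setU.
  case: (boolP (i \in Tt)) => hT; first by rewrite (subsetP sT _ hT).
  case: (boolP (i \in R)) => hR /=; last by rewrite andbF.
  by have := subsetP sR _ hR; rewrite inE => /negbTE ->.
have nE := cardE26.
have [Q [sQ cQ]] := @pick_sub _ E 6 ltac:(lia).
have [Tt' [sT' cT']] := @pick_sub _ Q 3 ltac:(lia).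
have iQ : indep Q := indep_sub (indepE m) sQ.
have sTP : Tt \subset Tt :|: R := subsetUl _ _.
have : 0 < g U A (Tt :|: R) Tt.
  by rewrite card_gt0; apply/set0Pn; exists y; rewrite !inE yU eSy eqxx.
rewrite (g_eq harm iP iQ sTP sT'); [|by rewrite cP cQ|by rewrite cT cT'].
rewrite card_gt0 => /set0Pn[z]; rewrite inE => /andP[zU /eqP ez].
pose Z := S z :&: E.
have h3 : 3 <= #|Z|.
  rewrite -cT'; apply: subset_leq_card; rewrite subsetI -ez subsetIl /=.
  by rewrite ez; apply: subset_trans sT' sQ.
have h4 : #|Z| + 3 <= #|E|.
  have e1 := cardsID (S z) E.
  have : #|Q :\: Tt'| <= #|E :\: S z|.
    apply: subset_leq_card; apply/subsetP => i; rewrite !in_setD => /andP[nT iQ'].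
    rewrite (subsetP sQ _ iQ') andbT; apply: contra nT => iS.
    by rewrite -ez in_setI iS iQ'.
  rewrite cardsD; move/setIidPr: (sT') => ->; rewrite cQ cT' /Z setIC.
  lia.
have c1 := count_lb harm (indepE m) zU (erefl Z).
have c2 := bin3 h3 h4.
have c3 := bin3_big m51 (cardE2 m).
lia.
Qed.

End MainA2.

Definition tf m (X : {set 'I_m}) :=
  forall I : {set 'I_m}, #|I| = 3 -> indep I -> I \subset X -> False.

Section Classify.
Variables (T : finType) (m : nat) (U : {set T}) (A : 'I_m -> {set T}).
Hypothesis harm : harmonic U A.
Hypothesis small : #|U| < m * (m - 2).
Hypothesis m51 : 51 <= m.
Implicit Types I J P Q X Y Tt K R : {set 'I_m}.

Local Notation S := (Sy A).
Local Notation E := (Eset m).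
Local Notation D := (Dset m).

Let i0 : 'I_m := Ordinal (leq_trans (isT : 0 < 51) m51).

Let L5 : {set 'I_m} := [set insubd i0 (2 * val k) | k : 'I_5].
Let H5 : {set 'I_m} := [set insubd i0 (2 * val k + 11) | k : 'I_5].

Let lt1 k : k < 5 -> 2 * k < m.
Proof. lia. Qed.
Let lt2 k : k < 5 -> 2 * k + 11 < m.
Proof. lia. Qed.

Let L5card : #|L5| = 5.
Proof.
rewrite card_imset ?card_ord // => [[a ha]] [b hb] /(congr1 val).
rewrite /= !val_insubd !lt1 // => e; apply: val_inj => /=; lia.
Qed.

Let H5card : #|H5| = 5.
Proof.
rewrite card_imset ?card_ord // => [[a ha]] [b hb] /(congr1 val).
rewrite /= !val_insubd !lt2 // => e; apply: val_inj => /=; lia.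
Qed.

Let L5P i : i \in L5 -> ~~ odd i /\ val i <= 8.
Proof.
case/imsetP => [[k hk]] _ ->; rewrite /= val_insubd lt1 //; split; last lia.
by rewrite oddM.
Qed.

Let H5P i : i \in H5 -> odd i /\ 11 <= val i <= 19.
Proof.
case/imsetP => [[k hk]] _ ->; rewrite /= val_insubd lt2 //; split; last lia.
by rewrite oddD oddM.
Qed.

Let L5E : L5 \subset E.
Proof. by apply/subsetP => i /L5P[h _]; rewrite !inE. Qed.

Let H5D : H5 \subset D.
Proof. by apply/subsetP => i /H5P[h _]; rewrite !inE. Qed.

Let indep_LH : indep (L5 :|: H5).
Proof.
apply: indep_U; [exact: indep_sub (indepE m) L5E|exact: indep_sub (indepD m) H5D|].
move=> x z /L5P[_ hx] /H5P[_ hz]; lia.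
Qed.

Let indep_HL : indep (H5 :|: L5).
Proof. by rewrite setUC. Qed.

Lemma classify y : y \in U ->
  (#|S y| <= 4 /\ tf (S y)) \/ (#|~: S y| <= 4 /\ tf (~: S y)).
Proof.
move=> yU.
have splitS X : #|X :&: S y| + #|X :&: ~: S y| = #|X| by rewrite -setDE cardsID.
have H3 X Y : 3 <= #|X :&: S y| -> 3 <= #|Y :&: ~: S y| -> indep (X :|: Y) -> False.
  move=> h1 h2 iXY.
  have [Tt [sT cT]] := pick_sub h1.
  have [R [sR cR]] := pick_sub h2.
  apply: (W6 harm small m51 yU cT cR).
  - by apply: subset_trans sT (subsetIr _ _).
  - by apply: subset_trans sR (subsetIr _ _).
  - apply: (indep_sub iXY); apply: setUSS.
      by apply: subset_trans sT (subsetIl _ _).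
    by apply: subset_trans sR (subsetIl _ _).
have st X : indep X -> #|X :&: S y| <= 2 \/ #|X :&: ~: S y| <= 2.
  move=> iX; case: (leqP #|X :&: S y| 2) => h1; first by left.
  case: (leqP #|X :&: ~: S y| 2) => h2; first by right.
  by case: (H3 X X h1 h2); rewrite setUid.
have nE : 26 <= #|E| by have := cardE2 m; lia.
have cEsub X : X \subset E -> forall B : {set 'I_m}, #|X :&: B| <= #|E :&: B|.
  by move=> sX B; apply: subset_leq_card; apply: setSI.
have cDsub X : X \subset D -> forall B : {set 'I_m}, #|X :&: B| <= #|D :&: B|.
  by move=> sX B; apply: subset_leq_card; apply: setSI.
have cardSplit (B : {set 'I_m}) : #|B| = #|D :&: B| + #|E :&: B|.
  rewrite -(cardsID D B) setIC; congr (_ + _); rewrite setDE setIC //.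
have [e1|e1] := st E (indepE m); have [d1|d1] := st D (indepD m).
- left; split; first by rewrite cardSplit; lia.
  move=> I cI iI sI.
  have nb := NB_card I; rewrite cI in nb.
  apply: (H3 I (E :\: NB I)).
  + by move/setIidPl: sI => ->; rewrite cI.
  + have h : (E :&: ~: S y) :\: NB I \subset (E :\: NB I) :&: ~: S y.
      apply/subsetP => i; rewrite !in_setD !in_setI => /andP[a /andP[b c]]; by rewrite in_setD a b c.
    apply: leq_trans (subset_leq_card h).
    have := cardsD_ge (E :&: ~: S y) (NB I); have := splitS E; move=> h1 h2; rewrite -h1 in nE; set a := #|E :&: S y| in e1 nE; set c := #|NB I| in nb h2; lia.
  + apply: indep_U iI (indep_sub (indepE m) (subsetDl _ _)) _ => x z hx.
    rewrite in_setD => /andP[hz _]; apply: NB_nadj hx _.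
    by rewrite in_setC.
- exfalso; apply: (H3 H5 L5); last exact: indep_HL.
  + have := splitS H5; have := cDsub H5 H5D (~: S y); lia.
  + have := splitS L5; have := cEsub L5 L5E (S y); lia.
- exfalso; apply: (H3 L5 H5); last exact: indep_LH.
  + have := splitS L5; have := cEsub L5 L5E (~: S y); lia.
  + have := splitS H5; have := cDsub H5 H5D (S y); lia.
- right; split; first by rewrite cardSplit; lia.
  move=> I cI iI sI.
  have nb := NB_card I; rewrite cI in nb.
  apply: (H3 (E :\: NB I) I).
  + have h : (E :&: S y) :\: NB I \subset (E :\: NB I) :&: S y.
      apply/subsetP => i; rewrite !in_setD !in_setI => /andP[a /andP[b c]]; by rewrite in_setD a b c.
    apply: leq_trans (subset_leq_card h).
    have := cardsD_ge (E :&: S y) (NB I); have := splitS E; move=> h1 h2; rewrite -h1 in nE; set a := #|E :&: ~: S y| in e1 nE; set c := #|NB I| in nb h2; lia.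
  + by move/setIidPl: sI => ->; rewrite cI.
  + apply: indep_U (indep_sub (indepE m) (subsetDl _ _)) iI _ => x z.
    rewrite in_setD => /andP[hx _] hz.
    have [] := NB_nadj hz (_ : x \in ~: NB I); first by rewrite in_setC.
    by move=> a b; split.
Qed.

End Classify.

Import GRing.Theory.

Section MainB.
Variables (T : finType) (m : nat) (U : {set T}) (A : 'I_m -> {set T}).
Hypothesis harm : harmonic U A.
Hypothesis small : #|U| < m * (m - 2).
Hypothesis m51 : 51 <= m.
Implicit Types I J P Q X Y Tt K R F : {set 'I_m}.

Local Notation S := (Sy A).

Definition U1 := [set y in U | #|S y| <= 4].
Definition U2 := U :\: U1.

Lemma cardSC y : #|S y| + #|~: S y| = m.
Proof. by rewrite cardsC card_ord. Qed.

Lemma U1S y : y \in U1 -> #|S y| <= 4 /\ tf (S y).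
Proof.
rewrite inE => /andP[yU h].
case: (classify harm small m51 yU) => // [[h2 _]].
have := cardSC y; lia.
Qed.

Lemma U2C y : y \in U2 -> #|~: S y| <= 4 /\ tf (~: S y).
Proof.
rewrite in_setD inE => /andP[h yU]; rewrite yU /= in h.
case: (classify harm small m51 yU) => // [[h2 _]].
by rewrite h2 in h.
Qed.

Definition f2 I := #|[set y in U2 | I \subset S y]|.

Lemma f2_big I : 5 <= #|I| -> f2 I = f U A I.
Proof.
move=> hI; rewrite /f2 /f; apply: eq_card => y; rewrite !inE.
case: (boolP (I \subset S y)) => hs; rewrite ?andbF //= andbT.
have : 5 <= #|S y| by apply: leq_trans hI (subset_leq_card hs).
by case: (y \in U) => //=; case: leqP.
Qed.

Local Open Scope ring_scope.

Lemma f2Z I : (f2 I : int) = \sum_(y in U2) (if I \subset S y then 1 else 0).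
Proof. exact: (cardZ U2 (fun y => I \subset S y)). Qed.

Lemma alt2 I F : #|F| = 5%N ->
  \sum_(K : {set 'I_m} | K \subset F) sgn #|K| * (f2 (I :|: K) : int) = 0.
Proof.
move=> cF.
under eq_bigr do rewrite f2Z mulr_sumr.
rewrite exchange_big /=; apply: big1 => y yU2.
transitivity (if I \subset S y then
   \sum_(K : {set 'I_m} | K \subset F) (if K \subset S y then sgn #|K| else 0) else 0).
  case: (boolP (I \subset S y)) => h.
    apply: eq_bigr => K _; rewrite subUset h /=.
    by case: (K \subset S y); rewrite ?mulr1 ?mulr0.
  by rewrite big1 // => K _; rewrite subUset (negbTE h) /= mulr0.
rewrite alt_sum_sub.
have : F :&: S y != set0.
  apply/negP => /eqP e.
  have : F \subset ~: S y.
    apply/subsetP => i hi; rewrite in_setC; apply/negP => hs.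
    by have := in_set0 i; rewrite -e in_setI hi hs.
  move/subset_leq_card; have [h _] := U2C yU2; rewrite cF; lia.
by move/negbTE => ->; case: ifP.
Qed.

Lemma alt2' I F : #|F| = 5%N ->
  (f2 I : int) = - \sum_(K : {set 'I_m} | (K \subset F) && (K != set0)) sgn #|K| * (f2 (I :|: K) : int).
Proof.
move=> cF; have := alt2 I cF.
rewrite (bigD1 set0) ?sub0set //= cards0 setU0 /sgn expr0 mul1r.
by move/eqP; rewrite addr_eq0 => /eqP.
Qed.

Local Close Scope ring_scope.

Lemma claim n : forall I J, #|I| = #|J| -> run_decomp (idx I) = run_decomp (idx J) ->
  5 <= #|I| + n -> f2 I = f2 J.
Proof.
elim: n => [|n IH] I J eIJ rIJ h.
  rewrite !f2_big -?eIJ; try lia.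
  by rewrite -!fE; apply: harm.
case: (leqP 5 (#|I| + n)) => h'; first exact: IH.
pose X := I :|: J.
have cX : #|X| <= 8.
  apply: leq_trans (cardsU_le _ _) _; rewrite -eIJ; lia.
have cN : 5 <= #|~: NB X|.
  have := NB_card X; have := cardsC (NB X); rewrite card_ord.
  move=> e1 e2; set c := #|NB X| in e1 e2; lia.
have [F [sF cF]] := pick_sub cN.
have sI : I \subset X := subsetUl _ _.
have sJ : J \subset X := subsetUr _ _.
have key : forall K, K \subset F -> K != set0 -> f2 (I :|: K) = f2 (J :|: K).
  move=> K sK nK.
  have sKX : K \subset ~: NB X := subset_trans sK sF.
  have sKI : K \subset ~: NB I by apply: subset_trans sKX _; rewrite setCS NB_mono.
  have sKJ : K \subset ~: NB J by apply: subset_trans sKX _; rewrite setCS NB_mono.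
  have dis Y : Y \subset X -> Y :&: K = set0.
    move=> sY; apply/setP => i; rewrite !inE; apply/negP => /andP[h1 h2].
    have := subsetP sKX _ h2; rewrite in_setC => /negP; apply.
    by apply: (subsetP (NB_self X)); apply: (subsetP sY).
  apply: IH.
  - by rewrite !cardsU_disj ?dis // eIJ.
  - by apply: rd_U => //; apply: NB_sep.
  - rewrite cardsU_disj ?dis //; have : 0 < #|K| by rewrite card_gt0.
    lia.
have e1 := alt2' I cF. have e2 := alt2' J cF.
have : (f2 I : int) = f2 J.
  rewrite e1 e2; congr (- _)%R; apply: eq_bigr => K /andP[sK nK].
  by rewrite key.
by case.
Qed.

End MainB.

Theorem lemma4p25 (T : finType) (m : nat) (U : {set T}) (A : 'I_m -> {set T}) :
  (forall i, A i \subset U) ->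
  harmonic U A ->
  #|U| < m * (m - 2) ->
  51 <= m ->
  exists U1 U2 : {set T},
    [/\ U1 :|: U2 = U, [disjoint U1 & U2],
        harmonic U1 (fun i => A i :&: U1),
        harmonic U2 (fun i => A i :&: U2) &
        forall I : {set 'I_m}, #|I| = 3 -> nonconsecutive I ->
          Gsys U1 (fun i => A i :&: U1) I set0 = set0 /\
          Gsys U2 (fun i => A i :&: U2) set0 I = set0].
Proof.
move=> AU harm small m51.
set V1 := U1 U A; set V2 := U2 U A.
have sV1 : V1 \subset U by apply/subsetP => y; rewrite inE => /andP[].
have G1 : forall I, Gsys V1 (fun i => A i :&: V1) I set0 = [set y in V1 | I \subset Sy A y].
  move=> I; rewrite GsysE; apply/setP => y; rewrite in_set [in RHS]in_set.
  case: (boolP (y \in V1)) => //= h; apply/forall_inP/subsetP => H i hi.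
    by rewrite inE; have := H i hi; rewrite in_setI => /andP[].
  by have := H i hi; rewrite in_setI h inE andbT.
have G2 : forall I, Gsys V2 (fun i => A i :&: V2) I set0 = [set y in V2 | I \subset Sy A y].
  move=> I; rewrite GsysE; apply/setP => y; rewrite in_set [in RHS]in_set.
  case: (boolP (y \in V2)) => //= h; apply/forall_inP/subsetP => H i hi.
    by rewrite inE; have := H i hi; rewrite in_setI => /andP[].
  by have := H i hi; rewrite in_setI h inE andbT.
have split : forall I : {set 'I_m}, #|[set y in V1 | I \subset Sy A y]| + f2 U A I = f U A I.
  move=> I; rewrite /f /f2 -(cardsID V1 [set y in U | I \subset Sy A y]).
  congr (_ + _); apply: eq_card => y; rewrite /V2 /U2 /V1 /U1 !inE;
    by case: (y \in U); case: (#|Sy A y| <= 4); case: (I \subset Sy A y).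
have h2 : forall I J : {set 'I_m}, run_decomp (idx I) = run_decomp (idx J) -> f2 U A I = f2 U A J.
  move=> I J r; apply: (claim harm small m51 (n := 5)) => //; last lia.
  exact: rd_card.
exists V1, V2; split.
- apply/setP => y; rewrite /V2 /U2 /V1 /U1 !inE.
  by case: (y \in U); case: (#|Sy A y| <= 4).
- rewrite -setI_eq0; apply/eqP/setP => y; rewrite /V2 /U2 /V1 /U1 !inE.
  by case: (y \in U); case: (#|Sy A y| <= 4).
- move=> I J r; rewrite !G1.
  have e1 := split I; have e2 := split J.
  have e3 := h2 I J r.
  have e4 : f U A I = f U A J by rewrite -!fE; apply: harm.
  by apply/eqP; rewrite -(eqn_add2r (f2 U A I)) e1 e3 e2 e4.
- by move=> I J r; rewrite !G2; apply: h2.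
move=> I cI nI; split.
  rewrite G1; apply/setP => y; rewrite !inE; apply/negP => /andP[yV sI].
  have yV1 : y \in U1 U A by rewrite inE.
  have [_ tfS] := U1S harm small m51 yV1.
  by apply: (tfS I cI (nonconsec_indep nI) sI).
apply/setP => y; rewrite /Gsys !inE big_set0 inE /=.
apply/negP => /andP[/andP[yV _] /bigcapP H].
have yV2 : y \in U2 U A by rewrite /U2 /U1 !inE.
have [_ tfC] := U2C harm small m51 yV2.
apply: (tfC I cI (nonconsec_indep nI)); apply/subsetP => i hi.
have := H i hi; rewrite in_setC inE.
move=> /andP[h yv]; rewrite inE; apply: contra h => hA; by rewrite in_setI hA yv.
Qed.
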